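(* Let $\mathcal F$ be a Banach space with a basis $B=(e_i)_{i\in\mathbb N}$ satisfying $\sup_i\|e_i\|_{\mathcal F}<\infty$. Let $p\in(0,\infty)$ and assume $B$ has the $p$-Temlyakov property: there is $c>0$ such that for every finite $I\subset\mathbb N$ and every $(c_i)_{i\in I}\in\mathbb R^I$, $$\tfrac1c|I|^{1/p}\min_{i\in I}|c_i|\le\Big\|\sum_{i\in I}c_ie_i\Big\|_{\mathcal F}\le c|I|^{1/p}\max_{i\in I}|c_i|.$$ Let $0<q<p$ and for $M\in\mathbb N$ define $$\Sigma^q_M=\Big\{\sum_{i=1}^Mc_ie_i:\ c_i\in\mathbb R,\ \sup_{0<\lambda<\infty}\lambda\,|\{i:|c_i|\ge\lambda\}|^{1/q}\le1\Big\}.$$ With $s=\frac1q-\frac1p$, the sequence $\Sigma^q=(\Sigma^q_M)_{M\in\mathbb N}$ is $s$-encodable in $\mathcal F$ (with the metric induced by $\|\cdot\|_{\mathcal F}$).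
   Context: A finite $X\subset A$ is an $\varepsilon$-covering of $A$ if every point of $A$ is within distance $\varepsilon$ of some point of $X$. For $\gamma,h>0$, a $(\gamma,h)$-encoding of $\Sigma=(\Sigma_M)_M$ is a sequence $(\Sigma(\gamma,h)_M)_M$ such that for some $c_1,c_2>0$ and all $M$, $\Sigma(\gamma,h)_M$ is a $c_1M^{-\gamma}$-covering of $\Sigma_M$ with $\log_2|\Sigma(\gamma,h)_M|\le c_2M^{1+h}$. $\Sigma$ is $\gamma$-encodable if it admits a $(\gamma,h)$-encoding for every $h>0$. *)

(* Defs.v *)
From HB Require Import structures.
From mathcomp Require Import all_boot all_order all_algebra.
From mathcomp Require Import all_classical all_reals all_analysis.
Set Implicit Arguments. Unset Strict Implicit. Unset Printing Implicit Defensive.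
Import Order.TTheory GRing.Theory Num.Theory.
Import numFieldNormedType.Exports.
Local Open Scope classical_set_scope.
Local Open Scope ring_scope.

Definition schauder_basis {R : realType} {F : normedModType R} (e : nat -> F) :=
  forall x : F, exists! c : nat -> R,
    (fun n => \sum_(0 <= i < n) c i *: e i) @ \oo --> x.

Definition is_covering {R : realType} {F : normedModType R}
  (X : seq F) (A : set F) (eps : R) :=
  uniq X /\ (forall x, x \in X -> A x) /\
  (forall a, A a -> exists2 x, x \in X & `|a - x| <= eps).

Definition is_encoding {R : realType} {F : normedModType R}
  (Sigma : nat -> set F) (gam h : R) (X : nat -> seq F) :=
  exists c1 c2 : R, 0 < c1 /\ 0 < c2 /\
    forall M : nat, (0 < M)%N ->
      is_covering (X M) (Sigma M) (c1 * powR (M%:R) (- gam)) /\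
      ln ((size (X M))%:R) / ln 2 <= c2 * powR (M%:R) (1 + h).

Definition encodable {R : realType} {F : normedModType R}
  (Sigma : nat -> set F) (gam : R) :=
  forall h : R, 0 < h -> exists X : nat -> seq F, is_encoding Sigma gam h X.

Definition temlyakov {R : realType} {F : normedModType R} (e : nat -> F) (p : R) :=
  exists c : R, 0 < c /\
    forall (I : seq nat) (a : nat -> R), uniq I -> I != [::] ->
      let mn := \big[Num.min/`|a (head 0%N I)|]_(i <- I) `|a i| in
      let mx := \big[Num.max/`|a (head 0%N I)|]_(i <- I) `|a i| in
      c^-1 * powR ((size I)%:R) p^-1 * mn <= `|\sum_(i <- I) a i *: e i| /\
      `|\sum_(i <- I) a i *: e i| <= c * powR ((size I)%:R) p^-1 * mx.

Definition SigmaQ {R : realType} {F : normedModType R} (e : nat -> F) (q : R)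
  (M : nat) : set F :=
  [set x | exists a : nat -> R, x = \sum_(i < M) a i *: e i /\
     forall lam : R, 0 < lam ->
       lam * powR ((count (fun i => lam <= `|a i|) (iota 0 M))%:R) q^-1 <= 1].

(* Main.v *)
Require Import Defs.
From HB Require Import structures.
From mathcomp Require Import all_boot all_order all_algebra.
From mathcomp Require Import all_classical all_reals all_analysis.
From mathcomp Require Import zify ring lra.
Import Order.TTheory GRing.Theory Num.Theory.
Import numFieldNormedType.Exports.
Local Open Scope ring_scope.
Section Aux.
Context {R : realType}.

Definition sgn (b : bool) : R := if b then -1 else 1.

Definition tr (N : nat) (a : R) : R :=
  sgn (a < 0) * ((Num.truncn (`|a| * N%:R))%:R / N%:R).

Lemma normsgn b : `|sgn b| = 1.
Proof. by case: b; rewrite /sgn ?normrN normr1. Qed.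

Lemma sgn_abs (a : R) : a = sgn (a < 0) * `|a|.
Proof.
rewrite /sgn; case: ltrP => h.
  by rewrite ltr0_norm // mulN1r opprK.
by rewrite ger0_norm // mul1r.
Qed.

Lemma tr_norm N a : (0 < N)%N -> `|tr N a| <= `|a|.
Proof.
move=> N0; have NR : 0 < N%:R :> R by rewrite ltr0n.
rewrite /tr normrM normsgn mul1r ger0_norm ?divr_ge0 //.
rewrite ler_pdivrMr //; rewrite truncn_le; by rewrite mulr_ge0.
Qed.

Lemma tr_err N a : (0 < N)%N -> `|a - tr N a| <= N%:R^-1.
Proof.
move=> N0; have NR : 0 < N%:R :> R by rewrite ltr0n.
have x0 : 0 <= `|a| * N%:R by rewrite mulr_ge0.
have /andP[h1 h2] := truncn_itv x0.
set m := Num.truncn _ in h1 h2 *.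
have -> : a - tr N a = sgn (a < 0) * ((`|a| * N%:R - m%:R) / N%:R).
  rewrite /tr {1}(sgn_abs a) -mulrBr; congr (_ * _).
  by rewrite mulrBl mulfK // gt_eqF.
rewrite normrM normsgn mul1r ger0_norm; last by rewrite divr_ge0 // subr_ge0.
rewrite ler_pdivrMr // mulVf ?gt_eqF //.
rewrite -natr1 in h2; rewrite lerBlDl; exact: ltW.
Qed.


Definition gval (N : nat) (g : bool * 'I_N.+1) : R :=
  sgn g.1 * ((g.2 : nat)%:R / N%:R).

Definition idx (N : nat) (a : R) : bool * 'I_N.+1 :=
  (a < 0, inord (Num.truncn (`|a| * N%:R))).

Lemma val_idx N a : (0 < N)%N -> `|a| <= 1 -> gval N (idx N a) = tr N a.
Proof.
move=> N0 a1; rewrite /gval /idx /tr /= inordK // ltnS truncn_le_nat.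
have NR : 0 < N%:R :> R by rewrite ltr0n.
apply: (le_lt_trans (y := N%:R)); first by rewrite ler_piMl // ltW.
by rewrite ltr_nat.
Qed.

Definition SigC (q : R) (M : nat) (a : nat -> R) :=
  forall lam : R, 0 < lam ->
       lam * powR ((count (fun i => lam <= `|a i|) (iota 0 M))%:R) q^-1 <= 1.

Lemma sig_le1 (a : nat -> R) q M i : 0 < q -> SigC q M a -> (i < M)%N -> `|a i| <= 1.
Proof.
move=> q0 S iM; have [->|a0] := eqVneq (`|a i|) 0; first by [].
have lp : 0 < `|a i| by rewrite lt_neqAle eq_sym a0 normr_ge0.
have := S _ lp; apply: le_trans.
rewrite ler_peMr //.
have c1 : (1 <= count (fun j : nat => (`|a i| <= `|a j|)%R) (iota 0 M))%N.
  rewrite -has_count; apply/hasP; exists i => //.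
  by rewrite mem_iota add0n iM.
apply: (le_trans (y := powR 1 q^-1)); first by rewrite powR1.
have qi : 0 <= q^-1 by rewrite invr_ge0 ltW.
apply: (ge0_ler_powR qi); rewrite ?nnegrE ?ler0n //.
by rewrite (ler_nat _ 1).
Qed.

Lemma sig_tr (a : nat -> R) q M N : 0 < q -> (0 < N)%N -> SigC q M a ->
  SigC q M (fun i => tr N (a i)).
Proof.
move=> q0 N0 S lam l0; apply: le_trans (S _ l0).
rewrite ler_pM2l //.
have qi : 0 <= q^-1 by rewrite invr_ge0 ltW.
apply: (ge0_ler_powR qi); rewrite ?nnegrE ?ler0n //.
rewrite ler_nat; apply: sub_count => j /= h.
exact: (le_trans h (tr_norm N (a j) N0)).
Qed.

Lemma ln_nat_le (n m : nat) : (n <= m)%N -> (0 < m)%N -> ln (n%:R : R) <= ln m%:R.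
Proof.
move=> nm m0; case: n nm => [|n] nm.
  by rewrite ln0 // ln_ge0 // ler1n.
by rewrite ler_ln ?posrE ?ltr0n // ler_nat.
Qed.

End Aux.

Theorem mainTheorem14 (R : realType) (F : completeNormedModType R)
  (e : nat -> F) (p q : R) :
  schauder_basis e ->
  (exists K : R, forall i, `|e i| <= K) ->
  0 < p -> temlyakov e p ->
  0 < q -> q < p ->
  encodable (SigmaQ e q) (q^-1 - p^-1).
Proof.
move=> _ [K hK] p0 _ q0 qp h h0.
set s := q^-1 - p^-1.
have K0 : 0 <= K := le_trans (normr_ge0 _) (hK 0%N).
pose k := (Num.truncn (s + 1)).+1.
have hk : s + 1 <= k%:R by apply: ltW; exact: truncnS_gt.
pose N (M : nat) := (M ^ k)%N.
pose vec (M : nat) (g : {ffun 'I_M -> bool * 'I_(N M).+1}) : F :=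
  \sum_(i < M) gval (N M) (g i) *: e i.
pose X (M : nat) := undup [seq vec M g | g <- enum {ffun 'I_M -> bool * 'I_(N M).+1}
   & `[< SigmaQ e q M (vec M g) >]].
exists X.
have l4 : 0 < ln (4 : R) by apply: ln_gt0; lra.
have l2 : 0 < ln (2 : R) by apply: ln_gt0; lra.
exists (K + 1), ((ln 4 + k%:R / h) / ln 2).
split; first lra.
split; first by rewrite divr_gt0 // ltr_pwDl // divr_ge0 // ltW.
move=> M M0.
have N0 : (0 < N M)%N by rewrite expn_gt0 M0.
split.
- split; first exact: undup_uniq.
  split.
  + move=> x; rewrite mem_undup => /mapP [g]; rewrite mem_filter.
    by move=> /andP [/asboolP hs _] ->.
  + move=> x [a [-> Sa]].
    pose g := [ffun i : 'I_M => idx (N M) (a i)].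
    have vg : vec M g = \sum_(i < M) tr (N M) (a i) *: e i.
      apply: eq_bigr => i _; rewrite ffunE val_idx //.
      exact: (sig_le1 a q M i q0 Sa (ltn_ord i)).
    exists (vec M g).
      rewrite mem_undup; apply/mapP; exists g => //.
      rewrite mem_filter mem_enum andbT; apply/asboolP.
      rewrite vg; exists (fun i => tr (N M) (a i)); split => //.
      exact: (sig_tr a q M (N M) q0 N0 Sa).
    rewrite vg -sumrB.
    apply: le_trans (ler_norm_sum _ _ _) _.
    apply: (le_trans (y := \sum_(i < M) (N M)%:R^-1 * K)).
      apply: ler_sum => i _; rewrite -scalerBl normrZ.
      by apply: ler_pM => //; exact: tr_err.
    rewrite big_const_ord iter_addr_0.
    have -> : forall y : R, y *+ M = y * M%:R by move=> y; rewrite mulr_natr.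
    have PM : M%:R / (N M)%:R <= powR M%:R (-s).
      have e1 : M%:R / (N M)%:R = powR M%:R (1 - k%:R) :> R.
        rewrite powRB; last by apply/implyP => _; rewrite pnatr_eq0 -lt0n.
        by rewrite powRr1 ?ler0n // powR_mulrn ?ler0n // /N natrX.
      rewrite e1; apply: ler_powR; [by rewrite ler1n | lra].
    rewrite (_ : _ * K * _ = K * (M%:R / (N M)%:R)); last by ring.
    apply: le_trans (ler_wpM2l K0 PM) _; rewrite ler_wpM2r ?powR_ge0 //; lra.
- have sz : (size (X M) <= (2 * (N M).+1) ^ M)%N.
    apply: leq_trans (size_undup _) _; rewrite size_map size_filter.
    apply: leq_trans (count_size _ _) _.
    by rewrite -cardT card_ffun card_prod card_bool !card_ord.
  have L1 : ln (size (X M))%:R <= M%:R * ln (2 * (N M).+1)%:R :> R.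
    apply: (le_trans (ln_nat_le _ _ sz _)); first by rewrite expn_gt0.
    by rewrite natrX lnXn ?ltr0n // mulr_natl.
  have L2 : ln (2 * (N M).+1)%:R <= ln 4 + k%:R * ln M%:R :> R.
    apply: (le_trans (y := ln (4 * (N M))%:R)).
      apply: ln_nat_le; lia.
    rewrite natrM lnM ?posrE ?ltr0n // /N natrX -powR_mulrn ?ler0n // ln_powR.
    by [].
  have L3 : ln M%:R <= powR M%:R h / h :> R.
    rewrite ler_pdivlMr // mulrC -ln_powR; apply: ltW; apply: ln_sublinear.
    by apply: powR_gt0; rewrite ltr0n.
  have P1 : 1 <= powR M%:R h :> R.
    have M1 : 1 <= M%:R :> R by rewrite ler1n.
    have := ler_powR M1 (ltW h0); by rewrite powRr0.
  have Pe : powR M%:R (1 + h) = M%:R * powR M%:R h :> R.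
    rewrite powRD ?powRr1 ?ler0n //.
    by apply/implyP => _; rewrite pnatr_eq0 -lt0n.
  have L4 : M%:R * (ln 4 + k%:R * ln M%:R) <= (ln 4 + k%:R / h) * (M%:R * powR M%:R h) :> R.
    have -> : (ln 4 + k%:R / h) * (M%:R * powR M%:R h) =
              M%:R * (ln 4 * powR M%:R h + k%:R * (powR M%:R h / h)) :> R by ring.
    apply: ler_wpM2l; first exact: ler0n.
    apply: lerD; first by rewrite ler_peMr // ltW.
    by apply: ler_wpM2l; first exact: ler0n.
  rewrite Pe mulrAC; apply: ler_wpM2r; first by rewrite invr_ge0 ltW.
  apply: le_trans L1 _; apply: le_trans L4.
  by apply: ler_wpM2l; first exact: ler0n.
Qed.
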